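(* Let $X$ be a finite set and $f$ a closure operator on $X$. The set $S(f)$ of closed sets of $f$ is a chain with respect to set inclusion if and only if there is a weak order $\succeq$ on $X$ generating $f$, i.e. such that $f(A)=H(\succeq,h_A)$ for every $A\subseteq X$. Moreover, the weak order generating $f$ is unique.
   Context: A closure operator on $X$ is a map $f:2^X\to 2^X$ with $A\subseteq f(A)$, $f(\emptyset)=\emptyset$, $f(f(A))=f(A)$, and $A\subseteq B\Rightarrow f(A)\subseteq f(B)$; $S(f)=\{A: f(A)=A\}$. A weak order is a complete and transitive binary relation. For a weak order $\succeq$ and $A\subseteq X$, $h_A(\succeq)=\{x\in A: x\succeq y\ \forall y\in A\}$; for nonempty $A$, $H(\succeq,h_A)=\{x\in X: h_A(\succeq)\succeq x\}$ (i.e. $x$ is weakly below the $\succeq$-maximal elements of $A$), and $H(\succeq,h_\emptyset)=\emptyset$. *)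

(* Defs.v *)
From mathcomp Require Import all_boot.
Set Implicit Arguments. Unset Strict Implicit. Unset Printing Implicit Defensive.

Definition closure_operator (X : finType) (f : {set X} -> {set X}) : Prop :=
  [/\ (forall A : {set X}, A \subset f A),
      f set0 = set0,
      (forall A : {set X}, f (f A) = f A) &
      (forall A B : {set X}, A \subset B -> f A \subset f B)].

Definition closed_sets (X : finType) (f : {set X} -> {set X}) : {set {set X}} :=
  [set A | f A == A].

Definition is_chain (X : finType) (S : {set {set X}}) : Prop :=
  forall A B : {set X}, A \in S -> B \in S -> (A \subset B) || (B \subset A).

(* weak order: complete and transitive; R x y reads x ⪰ y *)
Definition weak_order (X : finType) (R : rel X) : Prop :=
  (forall x y, R x y || R y x) /\ transitive R.

Definition hmax (X : finType) (R : rel X) (A : {set X}) : {set X} :=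
  [set x in A | [forall y in A, R x y]].

Definition Hset (X : finType) (R : rel X) (A : {set X}) : {set X} :=
  if A == set0 then set0
  else [set x | [exists y in hmax R A, R y x]].

Definition generates (X : finType) (R : rel X) (f : {set X} -> {set X}) : Prop :=
  forall A : {set X}, f A = Hset R A.

(* Main.v *)
Require Import Defs.
From mathcomp Require Import all_boot.
Set Implicit Arguments.

Section S.
Variable X : finType.

Lemma hmax_ex (R : rel X) : weak_order R -> forall (A : {set X}) (x0 : X),
  x0 \in A -> exists m, m \in hmax R A.
Proof.
move=> [tot tr] A x0 Hx0.
case: (arg_maxnP (fun y => #|[set z | R y z]|) Hx0) => m mA0 mmax.
have mA : m \in A := mA0.
exists m; rewrite inE mA /=; apply/forallP => y; apply/implyP => yA.
have Rref : forall x, R x x by move=> x; have := tot x x; rewrite orbb.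
case/orP: (tot m y) => // Rym.
have sub : [set z | R m z] \subset [set z | R y z].
  by apply/subsetP => z; rewrite !inE => Hz; exact: tr Rym Hz.
have /eqP E : [set z | R m z] == [set z | R y z].
  by rewrite eqEcard sub /=; exact: mmax.
have : y \in [set z | R y z] by rewrite inE Rref.
by rewrite -E inE.
Qed.

Lemma Hset_down (R : rel X) : weak_order R -> forall (A : {set X}) m,
  m \in hmax R A -> Hset R A = [set x | R m x].
Proof.
move=> [tot tr] A m Hm.
have mA : m \in A by move: Hm; rewrite inE => /andP[].
rewrite /Hset; case: eqP => [A0|_]; first by rewrite A0 inE in mA.
apply/setP => x; rewrite !inE; apply/existsP/idP => [[y /andP[Hy Ryx]]|Rmx].
  have yA : y \in A by move: Hy; rewrite inE => /andP[].
  move: Hm; rewrite inE => /andP[_ /forallP /(_ y)]; rewrite yA /= => Rmy.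
  exact: tr Rmy Ryx.
by exists m; rewrite Hm.
Qed.

Lemma gen_rel (R : rel X) (f : {set X} -> {set X}) :
  weak_order R -> generates R f -> forall x z, R x z = (z \in f [set x]).
Proof.
move=> wo gen x z.
have Rref : R x x by have := wo.1 x x; rewrite orbb.
have Hm : x \in hmax R [set x].
  by rewrite inE set11 /=; apply/forallP => y; apply/implyP; rewrite inE => /eqP ->.
by rewrite gen (Hset_down wo Hm) inE.
Qed.

End S.

Theorem proposition4 (X : finType) (f : {set X} -> {set X}) :
  closure_operator f ->
  (is_chain (closed_sets f) <-> exists R : rel X, weak_order R /\ generates R f) /\
  (forall R1 R2 : rel X, weak_order R1 -> generates R1 f ->
                         weak_order R2 -> generates R2 f -> R1 =2 R2).
Proof.
move=> [ext f0 idem mono]; split; last first.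
  move=> R1 R2 w1 g1 w2 g2 x z.
  by rewrite (gen_rel w1 g1) (gen_rel w2 g2).
split=> [ch|[R [wo gen]]]; last first.
  move=> A B; rewrite !inE => /eqP fA /eqP fB.
  case: (set_0Vmem A) => [->|[a aA]]; first by rewrite sub0set.
  case: (set_0Vmem B) => [->|[b bB]]; first by rewrite sub0set orbT.
  have [mA HmA] := hmax_ex wo aA.
  have [mB HmB] := hmax_ex wo bB.
  rewrite -fA -fB !gen (Hset_down wo HmA) (Hset_down wo HmB).
  case/orP: (wo.1 mA mB) => H.
    apply/orP; right; apply/subsetP => x; rewrite !inE => Hx; exact: wo.2 _ _ _ H Hx.
  apply/orP; left; apply/subsetP => x; rewrite !inE => Hx; exact: wo.2 _ _ _ H Hx.
have cl : forall x, f [set x] \in closed_sets f by move=> x; rewrite inE idem.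
have self : forall x, x \in f [set x].
  by move=> x; apply: (subsetP (ext _)); rewrite set11.
have sub1 : forall x y, y \in f [set x] -> f [set y] \subset f [set x].
  move=> x y Hy; have := mono [set y] (f [set x]); rewrite idem; apply.
  by rewrite sub1set.
exists (fun x y => y \in f [set x]); split.
  split.
    move=> x y; case/orP: (ch _ _ (cl x) (cl y)) => H.
      by apply/orP; right; apply: (subsetP H).
    by apply/orP; left; apply: (subsetP H).
  move=> y x z /= Hy Hz; exact: (subsetP (sub1 _ _ Hy)).
move=> A.
case: (set_0Vmem A) => [->|[a aA]]; first by rewrite f0 /Hset eqxx.
case: (arg_maxnP (fun y => #|f [set y]|) aA) => m mA0 mmax.
have mA : m \in A := mA0.
have below : forall y, y \in A -> y \in f [set m].
  move=> y yA; case/orP: (ch _ _ (cl m) (cl y)) => H.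
    have /eqP E : f [set m] == f [set y] by rewrite eqEcard H /=; exact: mmax.
    by rewrite E.
  by apply: (subsetP H).
have Hm : m \in hmax (fun x y => y \in f [set x]) A.
  by rewrite inE mA /=; apply/forallP => y; apply/implyP => /below.
have wo : weak_order (fun x y => y \in f [set x]).
  split.
    move=> x y; case/orP: (ch _ _ (cl x) (cl y)) => H.
      by apply/orP; right; apply: (subsetP H).
    by apply/orP; left; apply: (subsetP H).
  move=> y x z /= Hy Hz; exact: (subsetP (sub1 _ _ Hy)).
rewrite (Hset_down wo Hm); apply/setP => x; rewrite inE; apply/idP/idP => Hx.
  have : A \subset f [set m] by apply/subsetP => y /below.
  move/mono; rewrite idem => S; exact: (subsetP S).
have : f [set m] \subset f A by apply: mono; rewrite sub1set.
by move/subsetP; apply.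
Qed.
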